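(* Let $\mathcal{T}$ be an infinite set of theories of the form $T_I$ ($I$ an index set), and let $J$ be an index set with $T_J\notin\mathcal{T}$. Then $T_J\in\mathrm{Cl}_E(\mathcal{T})$ if and only if for every finite set $J_0\subset I_0$ there are infinitely many $T_I\in\mathcal{T}$ with $J\cap J_0=I\cap J_0$.
   Context: A predicate symbol $R$ is non-empty for a theory $T$ if $T\vdash\exists\bar x R(\bar x)$, empty otherwise. A complete theory $T$ in a predicate language is language uniform (LU) if for each arity $m$, every permutation of the set of $m$-ary symbols non-empty for $T$ preserves $T$. Let $T_0$ be a complete LU-theory in a relational language $\Sigma_0$, let $n\ge1$, and let $\{R_k\mid k\in I_0\}$, $I_0$ infinite, be the set of $n$-ary symbols of $\Sigma_0$ that are non-empty for $T_0$. Let $\Sigma'=\{R_k\mid k\in I_0\}\cup\{$symbols of $\Sigma_0$ of arity $\neq n\}$. An index set is an infinite $I\subseteq I_0$ with $|I|=|I_0|$ and $|I_0\setminus I|$ equal to the number of $n$-ary symbols of $\Sigma_0$ that are empty for $T_0$. For an index set $I$, $T_I$ is the complete $\Sigma'$-theory axiomatized by the restriction of $T_0$ to the language $\{R_k\mid k\in I\}\cup\{$symbols of arity $\ne n\}$ together with $\{\forall\bar x\neg R_l(\bar x)\mid l\in I_0\setminus I\}$. $E$-closure (over the language $\Sigma'$): let $E$ be a new binary symbol. The $E$-combination of a family $(\mathcal{A}_i)_{i}$ of $\Sigma'$-structures with disjoint universes is the $(\Sigma'\cup\{E\})$-structure on $\bigcup_iA_i$ with $E$ the equivalence relation whose classes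 are the $A_i$ and each $R\in\Sigma'$ interpreted as $\bigcup_iR^{\mathcal{A}_i}$. For a set $\mathcal{T}$ of complete $\Sigma'$-theories, $\mathrm{Cl}_E(\mathcal{T})$ is the set of complete theories of the $E$-classes (as induced $\Sigma'$-structures) of structures $\mathcal{A}'$ elementarily equivalent to some $E$-combination of structures whose theories lie in $\mathcal{T}$. *)

(* Defs.v *)
From Stdlib Require Import List Arith.
Import ListNotations.
Set Implicit Arguments.

(** The arity of symbols is given
      separately by [ar : Sym -> nat]; an atom [FRel s v] stands for
      R_s(x_{v 0}, ..., x_{v (ar s - 1)}). *)
Inductive form (Sym : Type) : Type :=
| FFal
| FRel (s : Sym) (v : nat -> nat)
| FEq (x y : nat)
| FNeg (p : form Sym)
| FAnd (p q : form Sym)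
| FOr (p q : form Sym)
| FImp (p q : form Sym)
| FAll (x : nat) (p : form Sym)
| FEx (x : nat) (p : form Sym).
Arguments FFal {Sym}.
Arguments FEq {Sym} x y.

Fixpoint free (Sym : Type) (ar : Sym -> nat) (x : nat) (p : form Sym) : Prop :=
  match p with
  | FFal => False
  | FRel s v => exists i, i < ar s /\ v i = x
  | FEq y z => x = y \/ x = z
  | FNeg q => free ar x q
  | FAnd q r | FOr q r | FImp q r => free ar x q \/ free ar x r
  | FAll y q | FEx y q => x <> y /\ free ar x q
  end.

Definition sentence (Sym : Type) (ar : Sym -> nat) (p : form Sym) : Prop :=
  forall x, ~ free ar x p.

Fixpoint uses (Sym : Type) (L : Sym -> Prop) (p : form Sym) : Prop :=
  match p with
  | FFal | FEq _ _ => True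
  | FRel s _ => L s
  | FNeg q | FAll _ q | FEx _ q => uses L q
  | FAnd q r | FOr q r | FImp q r => uses L q /\ uses L r
  end.

Fixpoint rename (Sym : Type) (f : Sym -> Sym) (p : form Sym) : form Sym :=
  match p with
  | FFal => FFal
  | FRel s v => FRel (f s) v
  | FEq x y => FEq x y
  | FNeg q => FNeg (rename f q)
  | FAnd q r => FAnd (rename f q) (rename f r)
  | FOr q r => FOr (rename f q) (rename f r)
  | FImp q r => FImp (rename f q) (rename f r)
  | FAll x q => FAll x (rename f q)
  | FEx x q => FEx x (rename f q)
  end.

Fixpoint exs (Sym : Type) (k : nat) (p : form Sym) : form Sym :=
  match k with 0 => p | S k' => FEx k' (exs k' p) end.
Fixpoint alls (Sym : Type) (k : nat) (p : form Sym) : form Sym :=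
  match k with 0 => p | S k' => FAll k' (alls k' p) end.

Definition atomR (Sym : Type) (s : Sym) : form Sym := FRel s (fun i => i).

(** * Semantics: structures have a nonempty universe; each symbol is
      interpreted as a set of lists (only lists of length [ar s] matter). *)
Record structure (Sym : Type) : Type := {
  dom : Type;
  dom_ne : inhabited dom;
  rel : Sym -> list dom -> Prop
}.

Definition upd (D : Type) (a : nat -> D) (x : nat) (d : D) : nat -> D :=
  fun y => if Nat.eqb y x then d else a y.

Fixpoint sat (Sym : Type) (ar : Sym -> nat) (M : structure Sym)
  (a : nat -> dom M) (p : form Sym) : Prop :=
  match p with
  | FFal => False
  | FRel s v => rel M s (map (fun i => a (v i)) (seq 0 (ar s)))
  | FEq x y => a x = a y
  | FNeg q => ~ sat ar M a q
  | FAnd q r => sat ar M a q /\ sat ar M a r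
  | FOr q r => sat ar M a q \/ sat ar M a r
  | FImp q r => sat ar M a q -> sat ar M a r
  | FAll x q => forall d, sat ar M (upd a x d) q
  | FEx x q => exists d, sat ar M (upd a x d) q
  end.

Definition models (Sym : Type) (ar : Sym -> nat) (M : structure Sym)
  (p : form Sym) : Prop := forall a, sat ar M a p.

Definition theory (Sym : Type) := form Sym -> Prop.

Definition Th (Sym : Type) (ar : Sym -> nat) (L : Sym -> Prop)
  (M : structure Sym) : theory Sym :=
  fun p => sentence ar p /\ uses L p /\ models ar M p.

Definition theq (Sym : Type) (T1 T2 : theory Sym) : Prop :=
  forall p, T1 p <-> T2 p.

Definition memT (Sym : Type) (TT : theory Sym -> Prop) (T : theory Sym) : Prop :=
  exists T', TT T' /\ theq T T'.

Definition nonempty_for (Sym : Type) (ar : Sym -> nat) (T : theory Sym)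
  (s : Sym) : Prop := T (exs (ar s) (atomR s)).

Definition bij (A B : Type) (f : A -> B) : Prop :=
  exists g : B -> A, (forall x, g (f x) = x) /\ (forall y, f (g y) = y).

Definition LU (Sym : Type) (ar : Sym -> nat) (T : theory Sym) : Prop :=
  forall (m : nat) (sigma : Sym -> Sym),
    bij sigma ->
    (forall s, ar s = m /\ nonempty_for ar T s ->
               ar (sigma s) = m /\ nonempty_for ar T (sigma s)) ->
    (forall s, ~ (ar s = m /\ nonempty_for ar T s) -> sigma s = s) ->
    forall p, T p <-> T (rename sigma p).

Definition finite_set (A : Type) (P : A -> Prop) : Prop :=
  exists l : list A, forall x, P x -> In x l.
Definition infinite_set (A : Type) (P : A -> Prop) : Prop := ~ finite_set P.
Definition equipotent (A B : Type) (P : A -> Prop) (Q : B -> Prop) : Prop :=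
  exists f : {x | P x} -> {y | Q y}, bij f.

Definition T0 (Sym : Type) (ar : Sym -> nat) (M0 : structure Sym) : theory Sym :=
  Th ar (fun _ => True) M0.

Definition I0 (Sym : Type) (ar : Sym -> nat) (M0 : structure Sym) (n : nat)
  (s : Sym) : Prop := ar s = n /\ nonempty_for ar (T0 ar M0) s.

Definition emptyN (Sym : Type) (ar : Sym -> nat) (M0 : structure Sym) (n : nat)
  (s : Sym) : Prop := ar s = n /\ ~ nonempty_for ar (T0 ar M0) s.

Definition Sigma' (Sym : Type) (ar : Sym -> nat) (M0 : structure Sym) (n : nat)
  (s : Sym) : Prop := I0 ar M0 n s \/ ar s <> n.

Definition index_set (Sym : Type) (ar : Sym -> nat) (M0 : structure Sym) (n : nat)
  (I : Sym -> Prop) : Prop :=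
  (forall s, I s -> I0 ar M0 n s) /\ infinite_set I /\
  equipotent I (I0 ar M0 n) /\
  equipotent (fun s => I0 ar M0 n s /\ ~ I s) (emptyN ar M0 n).

Definition T_I (Sym : Type) (ar : Sym -> nat) (M0 : structure Sym) (n : nat)
  (I : Sym -> Prop) : theory Sym :=
  fun p => sentence ar p /\ uses (Sigma' ar M0 n) p /\
    forall M : structure Sym,
      (forall q, T0 ar M0 q -> uses (fun s => I s \/ ar s <> n) q -> models ar M q) ->
      (forall l, I0 ar M0 n l -> ~ I l -> models ar M (alls (ar l) (FNeg (atomR l)))) ->
      models ar M p.

(** * E-combinations. The language Σ' ∪ {E} is [option Sym], [None] = E. *)
Definition arE (Sym : Type) (ar : Sym -> nat) (o : option Sym) : nat :=
  match o with None => 2 | Some s => ar s end.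

Definition LE (Sym : Type) (L : Sym -> Prop) (o : option Sym) : Prop :=
  match o with None => True | Some s => L s end.

Definition comb_pt (K : Type) (Sym : Type) (A : K -> structure Sym)
  (hK : inhabited K) : inhabited {i : K & dom (A i)} :=
  match hK with
  | inhabits i => match dom_ne (A i) with inhabits x => inhabits (existT _ i x) end
  end.

Definition comb (K : Type) (Sym : Type) (A : K -> structure Sym)
  (hK : inhabited K) : structure (option Sym) :=
  {| dom := {i : K & dom (A i)};
     dom_ne := comb_pt A hK;
     rel := fun o l =>
       match o with
       | None => match l with
                 | [x; y] => projT1 x = projT1 y
                 | _ => False
                 end
       | Some s => exists i (l' : list (dom (A i))),
                     l = map (existT _ i) l' /\ rel (A i) s l'
       end |}.

Definition eclass (Sym : Type) (B : structure (option Sym)) (a : dom B)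
  (h : rel B None [a; a]) : structure Sym :=
  {| dom := {x : dom B | rel B None [a; x]};
     dom_ne := inhabits (exist _ a h);
     rel := fun s l => rel B (Some s) (map (@proj1_sig _ _) l) |}.

Definition elem_equiv (Sym : Type) (ar : Sym -> nat) (L : Sym -> Prop)
  (M N : structure Sym) : Prop :=
  forall p, sentence ar p -> uses L p -> (models ar M p <-> models ar N p).

Definition ClE (Sym : Type) (ar : Sym -> nat) (M0 : structure Sym) (n : nat)
  (TT : theory Sym -> Prop) (T : theory Sym) : Prop :=
  exists (K : Type) (hK : inhabited K) (A : K -> structure Sym)
         (B : structure (option Sym)),
    (forall i, memT TT (Th ar (Sigma' ar M0 n) (A i))) /\
    elem_equiv (arE ar) (LE (Sigma' ar M0 n)) (comb A hK) B /\
    exists (a : dom B) (h : rel B None [a; a]),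
      theq T (Th ar (Sigma' ar M0 n) (eclass B a h)).

Definition infinitely_many (Sym : Type) (TT : theory Sym -> Prop)
  (P : theory Sym -> Prop) : Prop :=
  forall l : list (theory Sym),
    exists T, TT T /\ P T /\ forall T', In T' l -> ~ theq T T'.

(* Main.v *)
Require Import Defs.
From Stdlib Require Import List Arith Lia ClassicalEpsilon ProofIrrelevance Eqdep Classical.
Import ListNotations.
Set Implicit Arguments.
Unset Strict Implicit.


Lemma upd_same D (a:nat->D) x d : upd a x d x = d.
Proof. unfold upd; rewrite Nat.eqb_refl; auto. Qed.
Lemma upd_other D (a:nat->D) x y d : y <> x -> upd a x d y = a y.
Proof. intro H; unfold upd; rewrite (proj2 (Nat.eqb_neq _ _) H); auto. Qed.

Lemma sat_ext Sym (ar : Sym -> nat) (M:structure Sym) p : forall a b,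
  (forall x, free ar x p -> a x = b x) -> (sat ar M a p <-> sat ar M b p).
Proof.
  induction p; simpl; intros a b H.
  - tauto.
  - replace (map (fun i => b (v i)) (seq 0 (ar s))) with (map (fun i => a (v i)) (seq 0 (ar s))); [tauto|].
    apply map_ext_in; intros i Hi; apply in_seq in Hi; apply H; exists i; split; [lia|reflexivity].
  - rewrite (H x), (H y) by auto; tauto.
  - rewrite (IHp a b H); tauto.
  - rewrite (IHp1 a b), (IHp2 a b) by (intros; apply H; auto); tauto.
  - rewrite (IHp1 a b), (IHp2 a b) by (intros; apply H; auto); tauto.
  - rewrite (IHp1 a b), (IHp2 a b) by (intros; apply H; auto); tauto.
  - assert (Hu: forall d y, free ar y p -> upd a x d y = upd b x d y).
    { intros d y Hy; unfold upd; destruct (Nat.eqb y x) eqn:E; auto.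
      apply H; split; auto; apply Nat.eqb_neq; auto. }
    split; intros Hs d; [apply (IHp (upd a x d)) | apply (IHp _ (upd b x d))]; auto.
  - assert (Hu: forall d y, free ar y p -> upd a x d y = upd b x d y).
    { intros d y Hy; unfold upd; destruct (Nat.eqb y x) eqn:E; auto.
      apply H; split; auto; apply Nat.eqb_neq; auto. }
    split; intros [d Hs]; exists d; [apply (IHp (upd a x d)) | apply (IHp _ (upd b x d))]; auto.
Qed.

Lemma sent_sat Sym (ar : Sym -> nat) (M:structure Sym) p a b :
  sentence ar p -> sat ar M a p -> sat ar M b p.
Proof. intros Hs H; refine (proj1 (sat_ext (a:=a) (b:=b) _) H); intros x Hx; exfalso; apply (Hs x Hx). Qed.

Lemma sent_neg Sym (ar : Sym -> nat) (M:structure Sym) p :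
  sentence ar p -> ~ models ar M p -> models ar M (FNeg p).
Proof.
  intros Hs H b Hb; apply H; intro a; eapply sent_sat; eauto.
Qed.

Lemma models_neg Sym (ar : Sym -> nat) (M:structure Sym) p :
  models ar M (FNeg p) -> ~ models ar M p.
Proof.
  intros H1 H2. destruct (dom_ne M) as [x]. apply (H1 (fun _ => x)); apply H2.
Qed.

Lemma uses_mono Sym (L L' : Sym -> Prop) p : (forall s, L s -> L' s) -> uses L p -> uses L' p.
Proof. induction p; simpl; intuition. Qed.

Lemma iso_sat Sym (ar : Sym -> nat) (L:Sym->Prop) (M N:structure Sym) (h: dom M -> dom N)
  (hinj: forall x y, h x = h y -> x = y) (hsurj: forall y, exists x, h x = y)
  (hrel: forall s l, L s -> length l = ar s -> (rel M s l <-> rel N s (map h l))) :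
  forall p, uses L p -> forall a b, (forall x, b x = h (a x)) -> (sat ar M a p <-> sat ar N b p).
Proof.
  induction p; simpl; intros HU a b Hb.
  - tauto.
  - rewrite hrel by (auto; rewrite length_map, length_seq; auto).
    rewrite map_map. replace (map (fun i => b (v i)) (seq 0 (ar s))) with (map (fun x => h (a (v x))) (seq 0 (ar s))); [tauto|].
    apply map_ext; intros; rewrite Hb; auto.
  - rewrite !Hb; split; [intro E; rewrite E; auto | apply hinj].
  - rewrite (IHp HU a b Hb); tauto.
  - rewrite (IHp1 (proj1 HU) a b), (IHp2 (proj2 HU) a b) by auto; tauto.
  - rewrite (IHp1 (proj1 HU) a b), (IHp2 (proj2 HU) a b) by auto; tauto.
  - rewrite (IHp1 (proj1 HU) a b), (IHp2 (proj2 HU) a b) by auto; tauto.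
  - split; intros Hs d.
    + destruct (hsurj d) as [e He]. apply (IHp HU (upd a x e)); auto.
      intros y; unfold upd; destruct (Nat.eqb y x); auto.
    + apply (IHp HU _ (upd b x (h d))); auto.
      intros y; unfold upd; destruct (Nat.eqb y x); auto.
  - split; intros [d Hs].
    + exists (h d). apply (IHp HU (upd a x d)); auto.
      intros y; unfold upd; destruct (Nat.eqb y x); auto.
    + destruct (hsurj d) as [e He]. exists e. apply (IHp HU _ (upd b x d)); auto.
      intros y; unfold upd; destruct (Nat.eqb y x); auto.
Qed.

Lemma iso_models Sym (ar : Sym -> nat) (L:Sym->Prop) (M N:structure Sym) (h: dom M -> dom N)
  (hinj: forall x y, h x = h y -> x = y) (hsurj: forall y, exists x, h x = y)
  (hrel: forall s l, L s -> length l = ar s -> (rel M s l <-> rel N s (map h l))) :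
  forall p, uses L p -> (models ar M p <-> models ar N p).
Proof.
  intros p HU; split; intros H a.
  - set (g := fun y => proj1_sig (constructive_indefinite_description _ (hsurj y))).
    assert (Hg: forall y, h (g y) = y) by (intro y; unfold g; destruct constructive_indefinite_description; auto).
    apply (iso_sat hinj hsurj hrel HU (a:=fun x => g (a x)) (b:=a)); auto.
  - apply (iso_sat hinj hsurj hrel HU (a:=a) (b:=fun x => h (a x))); auto.
Qed.

Lemma theq_sym Sym (T1 T2 : theory Sym) : theq T1 T2 -> theq T2 T1.
Proof. intros H p; rewrite (H p); tauto. Qed.
Lemma theq_trans Sym (T1 T2 T3 : theory Sym) : theq T1 T2 -> theq T2 T3 -> theq T1 T3.
Proof. intros H H' p; rewrite (H p), (H' p); tauto. Qed.

Lemma iso_Th Sym (ar : Sym -> nat) (L:Sym->Prop) (M N:structure Sym) (h: dom M -> dom N)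
  (hinj: forall x y, h x = h y -> x = y) (hsurj: forall y, exists x, h x = y)
  (hrel: forall s l, L s -> length l = ar s -> (rel M s l <-> rel N s (map h l))) :
  theq (Th ar L M) (Th ar L N).
Proof.
  intro p; unfold Th; split; intros [H1 [H2 H3]]; repeat split; auto;
  [ rewrite <- (iso_models hinj hsurj hrel H2) | rewrite (iso_models hinj hsurj hrel H2)]; auto.
Qed.

Lemma exs_elim Sym (ar : Sym -> nat) (M:structure Sym) q : forall k a, sat ar M a (exs k q) -> exists a', sat ar M a' q.
Proof. induction k; simpl; intros a H; [eauto|]. destruct H as [d H]; eauto. Qed.

Lemma alls_elim Sym (ar : Sym -> nat) (M:structure Sym) q : forall k a, sat ar M a (alls k q) ->
  forall a', (forall x, k <= x -> a' x = a x) -> sat ar M a' q.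
Proof.
  induction k; simpl; intros a H a' Ha.
  - refine (proj2 (sat_ext (a:=a') (b:=a) _) H). intros x _; apply Ha; lia.
  - apply (IHk _ (H (a' k))). intros x Hx; unfold upd.
    destruct (Nat.eqb x k) eqn:E; [apply Nat.eqb_eq in E; subst; auto|].
    apply Nat.eqb_neq in E; apply Ha; lia.
Qed.

Lemma alls_intro Sym (ar : Sym -> nat) (M:structure Sym) q : (forall a, sat ar M a q) -> forall k a, sat ar M a (alls k q).
Proof. intro H; induction k; simpl; auto. Qed.

Lemma free_exs Sym (ar : Sym -> nat) q x : forall k, free ar x (exs k q) -> free ar x q /\ k <= x.
Proof. induction k; simpl; intros H; [split; auto; lia|]. destruct H as [H1 H2]; destruct (IHk H2); split; auto; lia. Qed.
Lemma free_alls Sym (ar : Sym -> nat) q x : forall k, free ar x (alls k q) -> free ar x q /\ k <= x.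
Proof. induction k; simpl; intros H; [split; auto; lia|]. destruct H as [H1 H2]; destruct (IHk H2); split; auto; lia. Qed.
Lemma uses_exs Sym (L : Sym -> Prop) q k : uses L (exs k q) = uses L q.
Proof. induction k; simpl; auto. Qed.
Lemma uses_alls Sym (L : Sym -> Prop) q k : uses L (alls k q) = uses L q.
Proof. induction k; simpl; auto. Qed.

Lemma sent_exR Sym (ar : Sym -> nat) s : sentence ar (exs (ar s) (atomR s)).
Proof. intros x H; apply free_exs in H; destruct H as [[i [H1 H2]] H3]; simpl in *; lia. Qed.
Lemma sent_allN Sym (ar : Sym -> nat) s : sentence ar (alls (ar s) (FNeg (atomR s))).
Proof. intros x H; apply free_alls in H; destruct H as [[i [H1 H2]] H3]; simpl in *; lia. Qed.


Fixpoint zero Sym (Z: Sym -> Prop) (p: form Sym) : form Sym :=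
  match p with
  | FFal => FFal
  | FRel s v => if excluded_middle_informative (Z s) then FFal else FRel s v
  | FEq x y => FEq x y
  | FNeg q => FNeg (zero Z q)
  | FAnd q r => FAnd (zero Z q) (zero Z r)
  | FOr q r => FOr (zero Z q) (zero Z r)
  | FImp q r => FImp (zero Z q) (zero Z r)
  | FAll x q => FAll x (zero Z q)
  | FEx x q => FEx x (zero Z q)
  end.

Lemma zero_sat Sym (ar : Sym -> nat) (M : structure Sym) (Z : Sym -> Prop) :
  (forall l, Z l -> forall a, ~ sat ar M a (atomR l)) ->
  forall p a, sat ar M a p <-> sat ar M a (zero Z p).
Proof.
  intros HZ p; induction p; intros a; simpl.
  - tauto.
  - destruct (excluded_middle_informative (Z s)) as [z|z]; simpl; [|tauto].
    split; [intro Hr; apply (HZ s z (fun i => a (v i))); exact Hr | tauto].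
  - tauto.
  - rewrite IHp; tauto.
  - rewrite IHp1, IHp2; tauto.
  - rewrite IHp1, IHp2; tauto.
  - rewrite IHp1, IHp2; tauto.
  - split; intros H d; [rewrite <- IHp | rewrite IHp]; auto.
  - split; intros [d H]; exists d; [rewrite <- IHp | rewrite IHp]; auto.
Qed.

Lemma free_zero Sym (ar : Sym -> nat) (Z : Sym -> Prop) x p : free ar x (zero Z p) -> free ar x p.
Proof.
  induction p; simpl; intuition.
  destruct (excluded_middle_informative (Z s)); simpl in *; tauto.
Qed.

Lemma uses_zero Sym (L Z : Sym -> Prop) p : uses L p -> uses (fun s => L s /\ ~ Z s) (zero Z p).
Proof.
  induction p; simpl; intuition.
  destruct (excluded_middle_informative (Z s)); simpl in *; tauto.
Qed.

Lemma uses_true Sym (p : form Sym) : uses (fun _ => True) p.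
Proof. induction p; simpl; auto. Qed.

Definition pairv (c x : nat) : nat -> nat := fun i => if Nat.eqb i 0 then c else x.

Fixpoint relv Sym (c:nat) (p: form Sym) : form (option Sym) :=
  match p with
  | FFal => FFal
  | FRel s v => FRel (Some s) v
  | FEq x y => FEq x y
  | FNeg q => FNeg (relv c q)
  | FAnd q r => FAnd (relv c q) (relv c r)
  | FOr q r => FOr (relv c q) (relv c r)
  | FImp q r => FImp (relv c q) (relv c r)
  | FAll x q => FAll x (FImp (FRel None (pairv c x)) (relv c q))
  | FEx x q => FEx x (FAnd (FRel None (pairv c x)) (relv c q))
  end.

Fixpoint noc Sym (ar : Sym -> nat) (c : nat) (p : form Sym) : Prop :=
  match p with
  | FFal => True
  | FRel s v => forall i, i < ar s -> v i <> c
  | FEq x y => x <> c /\ y <> c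
  | FNeg q => noc ar c q
  | FAnd q r | FOr q r | FImp q r => noc ar c q /\ noc ar c r
  | FAll x q | FEx x q => x <> c /\ noc ar c q
  end.

Lemma sig_inj (A : Type) (P : A -> Prop) (u w : {x | P x}) : proj1_sig u = proj1_sig w -> u = w.
Proof. destruct u, w; simpl; intro; subst; f_equal; apply proof_irrelevance. Qed.

Lemma relv_sat Sym (ar : Sym -> nat) (B: structure (option Sym)) (r: dom B) (h: rel B None [r;r]) c :
 forall p, noc ar c p -> forall (b: nat -> dom B) (a': nat -> dom (eclass B r h)),
  b c = r -> (forall x, x <> c -> b x = proj1_sig (a' x)) ->
  (sat (arE ar) B b (relv c p) <-> sat ar (eclass B r h) a' p).
Proof.
  induction p; simpl; intros Hn b a' Hc Hb.
  - tauto.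
  - replace (map (fun i => b (v i)) (seq 0 (ar s))) with (map (@proj1_sig _ _) (map (fun i => a' (v i)) (seq 0 (ar s)))); [tauto|].
    rewrite map_map; apply map_ext_in; intros i Hi; apply in_seq in Hi; rewrite Hb; auto; apply Hn; lia.
  - rewrite !Hb by tauto; split; [apply sig_inj | intro E; rewrite E; auto].
  - rewrite IHp; eauto; tauto.
  - rewrite IHp1, IHp2; eauto; tauto.
  - rewrite IHp1, IHp2; eauto; tauto.
  - rewrite IHp1, IHp2; eauto; tauto.
  - destruct Hn as [Hx Hn]. unfold pairv; simpl.
    split; intros H d.
    + specialize (H (proj1_sig d)). rewrite upd_other, upd_same, Hc in H by auto.
      rewrite <- (IHp Hn (upd b x (proj1_sig d))); [apply H, (proj2_sig d)| rewrite upd_other; auto|].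
      intros y Hy; unfold upd; destruct (Nat.eqb y x); auto.
    + rewrite upd_other, upd_same, Hc by auto. intro HE.
      specialize (H (exist _ d HE)).
      rewrite (IHp Hn (upd b x d) (upd a' x (exist _ d HE))); auto; [rewrite upd_other; auto|].
      intros y Hy; unfold upd; destruct (Nat.eqb y x); auto.
  - destruct Hn as [Hx Hn]. unfold pairv; simpl.
    split; intros [d H].
    + rewrite upd_other, upd_same, Hc in H by auto. destruct H as [HE H].
      exists (exist _ d HE).
      rewrite <- (IHp Hn (upd b x d)); auto; [rewrite upd_other; auto|].
      intros y Hy; unfold upd; destruct (Nat.eqb y x); auto.
    + exists (proj1_sig d). rewrite upd_other, upd_same, Hc by auto. split; [apply (proj2_sig d)|].
      rewrite (IHp Hn _ (upd a' x d)); auto; [rewrite upd_other; auto|].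
      intros y Hy; unfold upd; destruct (Nat.eqb y x); auto.
Qed.

Lemma free_relv Sym (ar : Sym -> nat) c y p : free (arE ar) y (relv c p) -> y = c \/ free ar y p.
Proof.
  induction p; simpl; try tauto; intros H.
  - destruct H as [Hx [[i [Hi Hv]]|H]].
    + unfold pairv in Hv; destruct (Nat.eqb i 0); [left; auto| subst; tauto].
    + destruct (IHp H); tauto.
  - destruct H as [Hx [[i [Hi Hv]]|H]].
    + unfold pairv in Hv; destruct (Nat.eqb i 0); [left; auto| subst; tauto].
    + destruct (IHp H); tauto.
Qed.

Lemma uses_relv Sym (L : Sym -> Prop) c p : uses L p -> uses (LE L) (relv c p).
Proof. induction p; simpl; intuition. Qed.

Lemma noc_ex Sym (ar : Sym -> nat) p : exists N, forall c, N <= c -> noc ar c p.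
Proof.
  induction p; simpl.
  - exists 0; auto.
  - exists (S (list_max (map v (seq 0 (ar s))))). intros c Hc i Hi.
    assert (v i <= list_max (map v (seq 0 (ar s)))).
    { assert (Hl := proj1 (list_max_le (map v (seq 0 (ar s))) _) (le_n _)).
      rewrite Forall_forall in Hl. apply Hl, in_map, in_seq; lia. }
    lia.
  - exists (S (max x y)); intros; lia.
  - auto.
  - destruct IHp1 as [N1 H1], IHp2 as [N2 H2]; exists (max N1 N2); intros c Hc; split; [apply H1|apply H2]; lia.
  - destruct IHp1 as [N1 H1], IHp2 as [N2 H2]; exists (max N1 N2); intros c Hc; split; [apply H1|apply H2]; lia.
  - destruct IHp1 as [N1 H1], IHp2 as [N2 H2]; exists (max N1 N2); intros c Hc; split; [apply H1|apply H2]; lia.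
  - destruct IHp as [N1 H1]; exists (max N1 (S x)); intros c Hc; split; [lia|apply H1; lia].
  - destruct IHp as [N1 H1]; exists (max N1 (S x)); intros c Hc; split; [lia|apply H1; lia].
Qed.

Definition Phi Sym (c : nat) (p : form Sym) : form (option Sym) :=
  FEx c (FAnd (FRel None (fun _ => c)) (relv c p)).

Lemma Phi_sent Sym (ar : Sym -> nat) c p : sentence ar p -> sentence (arE ar) (Phi c p).
Proof.
  intros Hs y H; simpl in H. destruct H as [Hy [[i [_ Hi]]|H]]; [congruence|].
  destruct (free_relv H); [congruence| apply (Hs y); auto].
Qed.

Lemma Phi_uses Sym (L : Sym -> Prop) c p : uses L p -> uses (LE L) (Phi c p).
Proof. intros; simpl; split; auto; apply uses_relv; auto. Qed.

Lemma Phi_sat Sym (ar : Sym -> nat) (B : structure (option Sym)) c p :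
  sentence ar p -> noc ar c p ->
  ((exists b, sat (arE ar) B b (Phi c p)) <->
   (exists r (h : rel B None [r;r]) a', sat ar (eclass B r h) a' p)).
Proof.
  intros Hs Hn; split.
  - intros [b [d [Hd H]]]. simpl in Hd. rewrite upd_same in Hd.
    exists d, Hd, (fun _ => exist _ d Hd).
    rewrite <- (relv_sat Hn (b:=fun _ => d)); auto.
    refine (proj1 (sat_ext (a:=upd b c d) (b:=fun _ => d) _) H).
    intros x Hx; destruct (free_relv Hx) as [->|Hf]; [apply upd_same| exfalso; apply (Hs x Hf)].
  - intros [r [h [a' H]]]. exists (fun _ => r), r. simpl. rewrite upd_same. split; [exact h|].
    refine (proj2 (relv_sat Hn (b:=upd (fun _ => r) c r) (a':=fun _ => exist _ r h) _ _) _).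
    + apply upd_same.
    + intros x Hx; unfold upd; destruct (Nat.eqb x c); auto.
    + eapply sent_sat; eauto.
Qed.

Fixpoint bigand Sym (ps : list (form Sym)) : form Sym :=
  match ps with [] => FNeg FFal | p :: ps => FAnd p (bigand ps) end.

Lemma bigand_sat Sym (ar : Sym -> nat) (M : structure Sym) a ps :
  sat ar M a (bigand ps) <-> (forall p, In p ps -> sat ar M a p).
Proof.
  induction ps; simpl; [split; auto; intros _ p []|].
  rewrite IHps; split; [intros [H1 H2] p [<-|Hp]; auto | intros H; split; auto].
Qed.

Lemma bigand_free Sym (ar : Sym -> nat) x ps : free ar x (bigand ps) -> exists p, In p ps /\ free ar x p.
Proof.
  induction ps; simpl; [tauto|]. intros [H|H]; [eauto|]. destruct (IHps H) as [p [? ?]]; eauto.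
Qed.

Lemma bigand_uses Sym (L : Sym -> Prop) ps : (forall p, In p ps -> uses L p) -> uses L (bigand ps).
Proof. induction ps; simpl; auto. Qed.


Definition Zs Sym (ar : Sym -> nat) (M0 : structure Sym) (n : nat) (I : Sym -> Prop) : structure Sym :=
  {| dom := dom M0; dom_ne := dom_ne M0;
     rel := fun s l => (I0 ar M0 n s -> I s) /\ rel M0 s l |}.

Lemma Zs_agree Sym (ar : Sym -> nat) (M0 : structure Sym) n (I U : Sym -> Prop) :
  (forall s, U s -> I0 ar M0 n s -> I s) ->
  forall p, uses U p -> models ar M0 p <-> models ar (Zs ar M0 n I) p.
Proof.
  intros HU p Hp.
  apply (iso_models (M:=M0) (N:=Zs ar M0 n I) (h:=fun x => x) (L:=U)); auto.
  - intros y; exists y; auto.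
  - intros s l Hs _; rewrite map_id; simpl; intuition.
Qed.

Lemma ThZ Sym (ar : Sym -> nat) (M0 : structure Sym) n (I : Sym -> Prop) :
  (forall s, I s -> I0 ar M0 n s) ->
  theq (Th ar (Sigma' ar M0 n) (Zs ar M0 n I)) (T_I ar M0 n I).
Proof.
  intros HI p; unfold Th, T_I; split; intros [Hs [Hu H]]; repeat split; auto.
  - intros M Hax Hemp.
    set (Zp := fun s => I0 ar M0 n s /\ ~ I s).
    assert (HM : forall l, Zp l -> forall a, ~ sat ar M a (atomR l)).
    { intros l [H1 H2] a Ha. specialize (Hemp l H1 H2 a).
      apply (alls_elim Hemp (a':=a)) ; auto. }
    assert (HZ : forall l, Zp l -> forall a, ~ sat ar (Zs ar M0 n I) a (atomR l)).
    { intros l [H1 H2] a [Ha _]. auto. }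
    assert (Hu' : uses (fun s => Sigma' ar M0 n s /\ ~ Zp s) (zero Zp p)) by (apply uses_zero; auto).
    assert (Hs' : sentence ar (zero Zp p)) by (intros x Hx; apply (Hs x), (free_zero Hx)).
    assert (H0 : T0 ar M0 (zero Zp p)).
    { split; auto; split; [apply uses_true|].
      assert (HA : forall s, (fun s => Sigma' ar M0 n s /\ ~ Zp s) s -> I0 ar M0 n s -> I s).
      { intros s [H1 H2] H3. apply NNPP; intro H4; apply H2; split; auto. }
      apply (proj2 (Zs_agree HA Hu')).
      intro a; rewrite <- zero_sat; auto. }
    intro a; rewrite (zero_sat HM). apply (Hax _ H0); auto.
    apply (uses_mono (L:=fun s => Sigma' ar M0 n s /\ ~ Zp s)); auto.
    intros s [[H1|H1] H2]; [left; apply NNPP; intro H4; apply H2; split; auto | right; auto].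
  - apply H.
    + intros q [Hq1 [Hq2 Hq3]] Hq4.
      assert (HA : forall s, (fun s => I s \/ ar s <> n) s -> I0 ar M0 n s -> I s).
      { intros s [H1|H1] H2; auto. destruct H2; congruence. }
      apply (proj1 (Zs_agree HA Hq4)); auto.
    + intros l H1 H2. intro a; apply alls_intro. intros a' [H3 _]; auto.
Qed.

Lemma TI_exR Sym (ar : Sym -> nat) (M0 : structure Sym) n (I : Sym -> Prop) (N : structure Sym) k :
  (forall s, I s -> I0 ar M0 n s) ->
  (forall p, T_I ar M0 n I p -> models ar N p) -> I0 ar M0 n k ->
  (models ar N (exs (ar k) (atomR k)) <-> I k).
Proof.
  intros HI HN Hk; split.
  - intros H. apply NNPP; intro Hn.
    assert (H2 : models ar N (alls (ar k) (FNeg (atomR k)))).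
    { apply HN. split; [apply sent_allN|]. split; [rewrite uses_alls; simpl; left; auto|].
      intros M _ Hemp; apply Hemp; auto. }
    destruct (dom_ne N) as [x].
    destruct (exs_elim (H (fun _ => x))) as [a' Ha'].
    exact (alls_elim (H2 a') (a':=a') (fun _ _ => eq_refl) Ha').
  - intros H. apply HN. split; [apply sent_exR|]. split; [rewrite uses_exs; simpl; left; auto|].
    intros M Hax _. apply Hax; [apply Hk|]. rewrite uses_exs; simpl; left; auto.
Qed.

Lemma TI_T0 Sym (ar : Sym -> nat) (M0 : structure Sym) n (I : Sym -> Prop) q :
  T0 ar M0 q -> uses (fun s => ar s <> n) q -> T_I ar M0 n I q.
Proof.
  intros [H1 [H2 H3]] Hu. split; auto. split.
  - apply (uses_mono (L:=fun s => ar s <> n)); auto; intros; right; auto.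
  - intros M Hax _. apply Hax; [split; auto|]. apply (uses_mono (L:=fun s => ar s <> n)); auto; intros; right; auto.
Qed.

Lemma zeroary Sym (ar : Sym -> nat) (M0 : structure Sym) n (I : Sym -> Prop) (N : structure Sym) s :
  1 <= n -> (forall p, T_I ar M0 n I p -> models ar N p) -> ar s = 0 ->
  (rel N s [] <-> rel M0 s []).
Proof.
  intros Hn HN Hs.
  set (p := @FRel Sym s (fun _ => 0)).
  assert (Hp : sentence ar p) by (intros x [i [Hi _]]; lia).
  assert (Hu : uses (fun s => ar s <> n) p) by (simpl; lia).
  assert (E : forall (M : structure Sym) a, sat ar M a p <-> rel M s []) by (intros; simpl; rewrite Hs; simpl; tauto).
  destruct (dom_ne N) as [x].
  destruct (classic (rel M0 s [])) as [H|H].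
  - split; auto; intros _. apply (E N (fun _ => x)). apply HN, TI_T0; auto.
    split; auto. split; [apply uses_true|]. intro a; apply E; auto.
  - split; [|tauto]. intro H'. 
    assert (Hneg: models ar N (FNeg p)).
    { apply HN, TI_T0; [|simpl; auto]. split; [intros y Hy; apply (Hp y Hy)|]. split; [apply uses_true|].
      intros a Ha; apply H, (E M0 a); auto. }
    exfalso; apply (Hneg (fun _ => x)). apply (proj2 (E N _)); auto.
Qed.


Lemma map_existT_inj (K : Type) (P : K -> Type) i (l l' : list (P i)) :
  map (existT P i) l = map (existT P i) l' -> l = l'.
Proof.
  revert l'; induction l; destruct l'; simpl; intros E; try discriminate; auto.
  injection E as E1 E2. apply inj_pairT2 in E1. subst; f_equal; auto.
Qed.

Lemma comb_class Sym (ar : Sym -> nat) (L : Sym -> Prop) K (A : K -> structure Sym) hK i y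
  (hz : rel (comb A hK) None [existT _ i y; existT _ i y]) :
  (forall s, L s -> ar s = 0 -> forall j, rel (A j) s [] <-> rel (A i) s []) ->
  forall p, uses L p -> (models ar (A i) p <-> models ar (eclass (comb A hK) (existT _ i y) hz) p).
Proof.
  intros H0 p Hp.
  set (h := fun x : dom (A i) => exist (fun w => rel (comb A hK) None [existT _ i y; w]) (existT _ i x) eq_refl
         : dom (eclass (comb A hK) (existT _ i y) hz)).
  apply (iso_models (h:=h) (L:=L)); auto.
  - intros x x' E. apply (f_equal (@proj1_sig _ _)) in E. simpl in E. apply inj_pairT2 in E; auto.
  - intros [[j x] p']. simpl in p'. subst j. exists x. apply sig_inj. reflexivity.
  - intros s l Hs Hl. simpl. rewrite map_map. simpl.
    destruct l as [|x0 l0].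
    + simpl in *. split.
      * intro Hr; exists i, []; auto.
      * intros [j [l' [E Hr]]]. symmetry in E; apply map_eq_nil in E; subst. apply (H0 s Hs (eq_sym Hl) j); auto.
    + split.
      * intro Hr; exists i, (x0 :: l0); auto.
      * intros [j [l' [E Hr]]]. destruct l' as [|x1 l1]; simpl in E; [discriminate|].
        injection E as E1 E2 E3. subst j.
        apply inj_pairT2 in E2. apply (map_existT_inj (P:=fun i => dom (A i)) (i:=i)) in E3. subst; auto.
Qed.

Lemma forward Sym (ar : Sym -> nat) (M0 : structure Sym) (n : nat) (TT : theory Sym -> Prop) (J : Sym -> Prop) :
  1 <= n ->
  (forall T, TT T -> exists I, index_set ar M0 n I /\ theq T (T_I ar M0 n I)) ->
  index_set ar M0 n J ->
  ~ memT TT (T_I ar M0 n J) ->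
  ClE ar M0 n TT (T_I ar M0 n J) ->
  forall J0 : list Sym, (forall k, In k J0 -> I0 ar M0 n k) ->
     infinitely_many TT (fun T => exists I, index_set ar M0 n I /\
        theq T (T_I ar M0 n I) /\ (forall k, In k J0 -> (J k <-> I k))).
Proof.
  intros Hn HTT HJidx HnotJ [K [hK [A [B [HA [Heq [a [h HJ]]]]]]]] J0 HJ0 l.
  set (Sg := Sigma' ar M0 n).
  set (Ecl := eclass B a h).
  set (exR := fun k => exs (ar k) (atomR k)).
  set (f1 := fun k => if excluded_middle_informative (models ar Ecl (exR k)) then exR k else FNeg (exR k)).
  set (P2 := fun (T' : theory Sym) p => sentence ar p /\ uses Sg p /\ models ar Ecl p /\ ~ T' p).
  set (f2 := fun T' => match excluded_middle_informative (exists p, P2 T' p) with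
                       | left H => proj1_sig (constructive_indefinite_description _ H)
                       | right _ => FNeg FFal end).
  set (ps := map f1 J0 ++ map f2 l).
  assert (Hps : forall p, In p ps -> sentence ar p /\ uses Sg p /\ models ar Ecl p).
  { intros p Hp; apply in_app_or in Hp; destruct Hp as [Hp|Hp]; apply in_map_iff in Hp; destruct Hp as [x [<- Hx]].
    - unfold f1; destruct (excluded_middle_informative (models ar Ecl (exR x))) as [Hm|Hm].
      + split; [apply sent_exR|]. split; auto. unfold exR; rewrite uses_exs; simpl; left; auto.
      + split; [intros y Hy; apply (sent_exR Hy)|]. split; [simpl; unfold exR; rewrite uses_exs; simpl; left; auto|].
        apply sent_neg; auto; apply sent_exR.
    - unfold f2; destruct (excluded_middle_informative (exists p, P2 x p)) as [He|He].
      + destruct (constructive_indefinite_description _ He) as [p' Hp']; simpl. destruct Hp' as (?&?&?&?); auto.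
      + split; [intros y Hy; exact Hy|]. split; [simpl; auto|]. intros b Hb; exact Hb. }
  set (chi := bigand ps).
  assert (Hcs : sentence ar chi).
  { intros x Hx; destruct (bigand_free Hx) as [p [Hp Hf]]; apply (proj1 (Hps p Hp) x Hf). }
  assert (Hcu : uses Sg chi) by (apply bigand_uses; intros p Hp; apply (Hps p Hp)).
  assert (Hcm : models ar Ecl chi).
  { intro b; apply bigand_sat; intros p Hp; apply (Hps p Hp). }
  destruct (noc_ex ar chi) as [c Hc]; specialize (Hc c (le_n _)).
  assert (HPs := Phi_sent (c:=c) Hcs).
  assert (HPu : uses (LE Sg) (Phi c chi)) by (apply Phi_uses; auto).
  assert (HB : models (arE ar) B (Phi c chi)).
  { destruct (dom_ne Ecl) as [e].
    assert (Hex : exists b, sat (arE ar) B b (Phi c chi)).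
    { apply Phi_sat; auto. exists a, h, (fun _ => e). apply Hcm. }
    destruct Hex as [b0 Hb0]. intro b; eapply sent_sat; eauto. }
  assert (HC : models (arE ar) (comb A hK) (Phi c chi)) by (apply (Heq _ HPs HPu); auto).
  destruct (dom_ne (comb A hK)) as [z0].
  destruct (proj1 (Phi_sat (comb A hK) Hcs Hc) (ex_intro _ (fun _ => z0) (HC _))) as [z [hz [a' Ha']]].
  assert (HAi : forall j, exists T I, TT T /\ index_set ar M0 n I /\ theq T (T_I ar M0 n I) /\
                                     theq (Th ar Sg (A j)) T).
  { intro j. destruct (HA j) as [T [HT1 HT2]]. destruct (HTT T HT1) as [I [HI1 HI2]].
    exists T, I; split; [auto|split; [auto|split; auto]]. }
  assert (HAm : forall j, exists I, index_set ar M0 n I /\ forall p, T_I ar M0 n I p -> models ar (A j) p).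
  { intro j. destruct (HAi j) as [T [I [_ [HI [HT1 HT2]]]]]. exists I; split; auto.
    intros p Hp. apply (HT1 p) in Hp. apply (HT2 p) in Hp. apply Hp. }
  destruct z as [i y].
  assert (Hi : models ar (A i) chi).
  { rewrite (comb_class (L:=Sg) hz); auto.
    - intro b; eapply sent_sat; eauto.
    - intros s Hs Hs0 j. destruct (HAm j) as [Ij [_ Hj]]. destruct (HAm i) as [Ii [_ Hii]].
      rewrite (zeroary Hn Hj Hs0), (zeroary Hn Hii Hs0); tauto. }
  destruct (HAi i) as [T [I [HT [HI [HTI HThT]]]]].
  assert (Hps' : forall p, In p ps -> models ar (A i) p).
  { intros p Hp b. pose proof (Hi b) as Hb; unfold chi in Hb; rewrite bigand_sat in Hb; apply Hb; auto. }
  exists T. split; auto. split.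
  - exists I; split; auto; split; auto. intros k Hk.
    assert (HJk : models ar Ecl (exR k) <-> J k).
    { apply (TI_exR (M0:=M0) (n:=n)); auto. apply HJidx. intros p Hp; apply (HJ p) in Hp; apply Hp. }
    assert (HIk : models ar (A i) (exR k) <-> I k).
    { apply (TI_exR (M0:=M0) (n:=n)); auto. apply HI. intros p Hp. apply (HTI p) in Hp. apply (HThT p) in Hp. apply Hp. }
    assert (Hf : models ar (A i) (f1 k)) by (apply Hps'; apply in_or_app; left; apply in_map; auto).
    unfold f1 in Hf. destruct (excluded_middle_informative (models ar Ecl (exR k))) as [Hm|Hm].
    + rewrite <- HJk, <- HIk; tauto.
    + apply models_neg in Hf. rewrite <- HJk, <- HIk; tauto.
  - intros T' HT' Heq'.
    assert (Hf : models ar (A i) (f2 T')) by (apply Hps'; apply in_or_app; right; apply in_map; auto).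
    unfold f2 in Hf. destruct (excluded_middle_informative (exists p, P2 T' p)) as [He|He].
    + destruct (constructive_indefinite_description _ He) as [p [Hp1 [Hp2 [Hp3 Hp4]]]]; simpl in Hf.
      apply Hp4. apply (Heq' p). apply (HThT p). split; auto.
    + assert (HT'p : forall p, sentence ar p -> uses Sg p -> models ar Ecl p -> T' p).
      { intros p H1 H2 H3. apply NNPP; intro H4; apply He; exists p; unfold P2; tauto. }
      apply HnotJ. exists T; split; auto. intro p; split.
      * intro Hp. apply (HJ p) in Hp. destruct Hp as [H1 [H2 H3]]. apply (Heq' p). apply HT'p; auto.
      * intro Hp. apply (HThT p) in Hp. destruct Hp as [H1 [H2 H3]]. apply (HJ p). split; auto; split; auto.
        apply NNPP; intro H4. apply sent_neg in H4; auto.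
        assert (H5 : T' (FNeg p)) by (apply HT'p; auto; intros x Hx; apply (H1 x Hx)).
        apply (Heq' (FNeg p)) in H5. apply (HThT (FNeg p)) in H5. destruct H5 as [_ [_ H5]].
        apply (models_neg H5); auto.
Qed.


Fixpoint syms Sym (p : form (option Sym)) : list Sym :=
  match p with
  | FRel (Some s) _ => [s]
  | FNeg q | FAll _ q | FEx _ q => syms q
  | FAnd q r | FOr q r | FImp q r => syms q ++ syms r
  | _ => []
  end.

Definition inS Sym (S : list Sym) (o : option Sym) : Prop :=
  match o with None => True | Some s => In s S end.

Lemma uses_syms Sym (p : form (option Sym)) : uses (inS (syms p)) p.
Proof.
  induction p; simpl; auto.
  - destruct s; simpl; auto.
  - split; [apply (uses_mono (L:=inS (syms p1))) | apply (uses_mono (L:=inS (syms p2)))]; auto;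
      intros [s|]; simpl; auto; intros; apply in_or_app; auto.
  - split; [apply (uses_mono (L:=inS (syms p1))) | apply (uses_mono (L:=inS (syms p2)))]; auto;
      intros [s|]; simpl; auto; intros; apply in_or_app; auto.
  - split; [apply (uses_mono (L:=inS (syms p1))) | apply (uses_mono (L:=inS (syms p2)))]; auto;
      intros [s|]; simpl; auto; intros; apply in_or_app; auto.
Qed.

Definition psi Sym (S : list Sym) (o : option (list Sym * nat)) : list Sym * nat :=
  match o with
  | None => (S, 0)
  | Some (S', m) => if excluded_middle_informative (S' = S) then (S', Datatypes.S m) else (S', m)
  end.

Lemma psi_fst Sym (S : list Sym) k : fst (psi S (Some k)) = fst k.
Proof. destruct k as [S' m]; simpl; destruct (excluded_middle_informative (S' = S)); auto. Qed.

Lemma psi_inj Sym (S : list Sym) o o' : psi S o = psi S o' -> o = o'.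
Proof.
  destruct o as [[S1 m1]|], o' as [[S2 m2]|]; simpl;
  repeat match goal with |- context [excluded_middle_informative ?P] => destruct (excluded_middle_informative P) end;
  intro E; try (injection E; intros); subst; auto; try congruence; try lia.
Qed.


Lemma psi_surj Sym (S : list Sym) k : exists o, psi S o = k.
Proof.
  destruct k as [S' m].
  destruct (excluded_middle_informative (S' = S)) as [e|e].
  - subst. destruct m as [|m].
    + exists None; auto.
    + exists (Some (S, m)); simpl. destruct (excluded_middle_informative (S = S)); [auto|congruence].
  - exists (Some (S', m)); simpl. destruct (excluded_middle_informative (S' = S)); [congruence|auto].
Qed.

Lemma map_h_inv (K' K D : Type) (f : K' -> K) (finj : forall x y, f x = f y -> x = y) o :
  forall (l0 : list {k' : K' & D}) (l1 : list D),
  map (fun z => existT (fun _ => D) (f (projT1 z)) (projT2 z)) l0 = map (existT (fun _ => D) (f o)) l1 ->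
  l0 = map (existT (fun _ => D) o) l1.
Proof.
  induction l0 as [|[o' x] l0 IH]; destruct l1 as [|x1 l1]; simpl; intro E; try discriminate; auto.
  injection E as E1 E2 E3. apply finj in E1. subst. f_equal. apply IH; auto.
Qed.

Lemma backward Sym (ar : Sym -> nat) (M0 : structure Sym) (n : nat) (TT : theory Sym -> Prop) (J : Sym -> Prop) :
  1 <= n ->
  index_set ar M0 n J ->
  (forall J0 : list Sym, (forall k, In k J0 -> I0 ar M0 n k) ->
     infinitely_many TT (fun T => exists I, index_set ar M0 n I /\
        theq T (T_I ar M0 n I) /\ (forall k, In k J0 -> (J k <-> I k)))) ->
  ClE ar M0 n TT (T_I ar M0 n J).
Proof.
  intros Hn HJidx Hright.
  assert (Hch : forall S : list Sym, exists I, (forall s, I s -> I0 ar M0 n s) /\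
             (exists T, TT T /\ theq T (T_I ar M0 n I)) /\
             (forall k, In k S -> I0 ar M0 n k -> (J k <-> I k))).
  { intro S. set (J0 := filter (fun s => if excluded_middle_informative (I0 ar M0 n s) then true else false) S).
    assert (HJ0: forall k, In k J0 -> I0 ar M0 n k).
    { intros k Hk; apply filter_In in Hk; destruct Hk as [_ Hk];
      destruct (excluded_middle_informative (I0 ar M0 n k)); auto; discriminate. }
    destruct (Hright J0 HJ0 []) as [T [HT [[I [HI [HTI Hag]]] _]]].
    exists I; split; [apply HI|]; split; [eauto|]. intros k Hk Hk0; apply Hag; apply filter_In; split; auto.
    destruct (excluded_middle_informative (I0 ar M0 n k)); auto; contradiction. }
  set (IS := fun S => proj1_sig (constructive_indefinite_description _ (Hch S))).
  assert (HIS : forall S, (forall s, IS S s -> I0 ar M0 n s) /\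
             (exists T, TT T /\ theq T (T_I ar M0 n (IS S))) /\
             (forall k, In k S -> I0 ar M0 n k -> (J k <-> IS S k))).
  { intro S; unfold IS; destruct (constructive_indefinite_description _ (Hch S)); auto. }
  set (K := (list Sym * nat)%type).
  set (A := fun k : K => Zs ar M0 n (IS (fst k))).
  set (Ifam' := fun o : option K => match o with None => J | Some k => IS (fst k) end).
  set (A' := fun o : option K => Zs ar M0 n (Ifam' o)).
  set (hK' := inhabits (@None K)).
  exists K, (inhabits ([], 0)), A, (comb A' hK').
  split; [|split].
  - intro i. destruct (HIS (fst i)) as [HI [[T [HT HTI]] _]]. exists T; split; auto.
    apply (theq_trans (ThZ HI)). apply theq_sym; auto.
  - intros p Hps Hpu. set (S := syms p).
    set (h := fun z : dom (comb A' hK') =>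
                existT (fun k => dom (A k)) (psi S (projT1 z)) (projT2 z) : dom (comb A (inhabits ([],0)))).
    symmetry.
    apply (iso_models (h:=h) (L:=inS S)); [| | |apply uses_syms].
    + intros [i x] [j x'] E. unfold h in E; simpl in E.
      assert (Hij : psi S i = psi S j) by (apply (f_equal (@projT1 _ _)) in E; exact E).
      apply psi_inj in Hij; subst j. apply inj_pairT2 in E. subst; auto.
    + intros [k x]. destruct (psi_surj S k) as [o Ho]. subst k. exists (existT _ o x). reflexivity.
    + intros [s|] l Hs Hl.
      * simpl in Hs, Hl.
        assert (Hag : forall o (l' : list (dom M0)), rel (A' o) s l' <-> rel (A (psi S o)) s l').
        { intros [k|] l'; simpl.
          - change (psi S (Some k)) with (psi S (Some k)). destruct k as [S1 m1]. simpl. destruct (excluded_middle_informative (S1 = S)); simpl; tauto.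
          - destruct (HIS S) as [_ [_ H3]]. split; intros [H1 H2]; split; auto; intro H4;
              [rewrite <- H3 | rewrite H3]; auto. }
        simpl. split.
        -- intros [o [l' [E Hr]]]. exists (psi S o), l'. split.
           ++ subst l. rewrite map_map. reflexivity.
           ++ apply Hag; auto.
        -- intros [k [l' [E Hr]]]. destruct l as [|z l0].
           ++ simpl in E; symmetry in E; apply map_eq_nil in E; subst l'.
              exists None, []. split; auto. simpl in Hl. simpl. split; [|apply Hr].
              intros [H1 _]; lia.
           ++ destruct l' as [|x1 l1]; [discriminate|]. simpl in E.
              injection E as E1 E2 E3. subst k.
              destruct z as [o x0]. simpl in E2. subst x1.
              apply (map_h_inv (D:=dom M0) (psi_inj (S:=S))) in E3. subst l0.
              exists o, (x0 :: l1). split; [reflexivity|]. apply Hag; auto.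
      * destruct l as [|z1 [|z2 [|z3 l]]]; simpl in Hl; try discriminate.
        simpl. split; [intro E; rewrite E; auto | apply psi_inj].
  - destruct (dom_ne M0) as [x0].
    exists (existT (fun o => dom (A' o)) None x0).
    exists (@eq_refl _ (@None K)).
    apply (theq_trans (theq_sym (ThZ (proj1 HJidx)))).
    match goal with |- theq _ (Th _ _ ?N) =>
    set (hh := fun x : dom (Zs ar M0 n J) => (exist (fun w => rel (comb A' hK') None [existT (fun o => dom (A' o)) None x0; w])
                 (existT (fun o => dom (A' o)) None x) (@eq_refl _ (@None K)) : dom N)) end.
    apply (iso_Th (h:=hh) (L:=Sigma' ar M0 n)).
    + intros x x' E. apply (f_equal (@proj1_sig _ _)) in E. simpl in E. apply inj_pairT2 in E; auto.
    + intros [[o x] p']. simpl in p'. subst o. exists x. apply sig_inj. reflexivity.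
    + intros s l _ Hl. simpl. rewrite map_map. simpl. split.
      * intros Hr. exists None, l. split; auto.
      * intros [o [l' [E Hr]]]. destruct l as [|x l0].
        -- simpl in E; symmetry in E; apply map_eq_nil in E; subst l'.
           simpl in Hl. split; [intros [H1 _]; lia | apply Hr].
        -- destruct l' as [|x1 l1]; [discriminate|]. simpl in E.
           injection E as E1 E2 E3. subst o. subst x1.
           apply (map_existT_inj (P:=fun o => dom (A' o)) (i:=None)) in E3. subst l1. exact Hr.
Qed.


Theorem proposition4p6 (Sym : Type) (ar : Sym -> nat) (M0 : structure Sym)
  (n : nat) (TT : theory Sym -> Prop) (J : Sym -> Prop) :
  LU ar (T0 ar M0) ->
  1 <= n ->
  infinite_set (I0 ar M0 n) ->
  (forall T, TT T -> exists I, index_set ar M0 n I /\ theq T (T_I ar M0 n I)) ->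
  infinitely_many TT (fun _ => True) ->
  index_set ar M0 n J ->
  ~ memT TT (T_I ar M0 n J) ->
  (ClE ar M0 n TT (T_I ar M0 n J) <->
   forall J0 : list Sym, (forall k, In k J0 -> I0 ar M0 n k) ->
     infinitely_many TT (fun T => exists I, index_set ar M0 n I /\
        theq T (T_I ar M0 n I) /\ (forall k, In k J0 -> (J k <-> I k)))).
Proof.
  intros _ Hn _ HTT _ HJ HnotJ. split.
  - intros HC. apply forward; auto.
  - intros Hr. apply backward; auto.
Qed.
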